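(* Let $\mathcal{A}=(\mathcal{H},|s_0\rangle,\Sigma,\{U_\sigma\}_{\sigma\in\Sigma},F)$ be a quantum automaton. For any nonempty finite word $w\in\Sigma^+$ and any $\varepsilon>0$, there is a positive integer $k$ such that $$\bigl|f^{\mathrm{ND}}_{\mathcal{A}}(uv)-f^{\mathrm{ND}}_{\mathcal{A}}(uw^kv)\bigr|\le\varepsilon$$ for all finite words $u\in\Sigma^*$ and all infinite words $v\in\Sigma^\omega$. Moreover, if $\mathcal{H}$ is $n$-dimensional, there is a constant $c$ such that such a $k$ can be chosen with $k\le (c\varepsilon)^{-n}$.
   Context: A quantum automaton is a tuple $\mathcal{A}=(\mathcal{H},|s_0\rangle,\Sigma,\{U_\sigma:\sigma\in\Sigma\},F)$ where $\mathcal{H}$ is a finite-dimensional complex Hilbert space, $|s_0\rangle\in\mathcal{H}$ is a unit vector (initial state), $\Sigma$ is a finite alphabet, each $U_\sigma$ is a unitary operator on $\mathcal{H}$, and $F$ is a subspace of $\mathcal{H}$ (accepting space). For a finite word $x=\sigma_1\cdots\sigma_m$ put $U_x=U_{\sigma_m}\cdots U_{\sigma_1}$ ($U_\epsilon=I$). For an infinite word $w=\sigma_1\sigma_2\cdots\in\Sigma^\omega$, let $w_n$ denote its prefix of length $n$; the non-disturbing run of $\mathcal{A}$ over $w$ is $|s_n\rangle=U_{w_n}|s_0\rangle$, $n\ge0$. The non-disturbing Büchi acceptance probability is $$f^{\mathrm{ND}}_{\mathcal{A}}(w)=\sup_{|\psi\rangle\in F,\ \||\psi\rangle\|=1}\ \sup_{\{n_i\}}\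 \inf_{i\ge1}|\langle\psi|s_{n_i}\rangle|^2,$$ where $\{n_i\}$ ranges over all strictly increasing sequences $0\le n_1<n_2<\cdots$ of natural numbers. $w^k$ denotes the $k$-fold concatenation of $w$. *)

(* Defs.v *)
From HB Require Import structures.
From mathcomp Require Import all_boot all_order all_algebra.
From mathcomp Require Import complex.
From mathcomp Require Import boolp classical_sets reals.
Set Implicit Arguments. Unset Strict Implicit. Unset Printing Implicit Defensive.
Import Order.TTheory GRing.Theory Num.Theory.
Local Open Scope ring_scope.
Local Open Scope classical_set_scope.

Section QA.
Variable R : realType.
Local Notation C := R[i].

Definition inner n (x y : 'cV[C]_n) : C := \sum_(i < n) ((x i 0)^*)%C * y i 0.

Definition sqmod (z : C) : R := let: Complex a b := z in a ^+ 2 + b ^+ 2.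

Definition unit_vector n (x : 'cV[C]_n) : Prop := inner x x = 1.

Definition adjoint n (U : 'M[C]_n) : 'M[C]_n := (map_mx (fun z => (z^*)%C) U)^T.

Definition unitary n (U : 'M[C]_n) : Prop := adjoint U *m U = 1%:M /\ U *m adjoint U = 1%:M.

(* The accepting space is the subspace spanned by the rows of F, viewed as
   (transposed) column vectors: x is in it iff (x^T <= F)%MS. *)
Definition in_space n (F : 'M[C]_n) (x : 'cV[C]_n) : bool := (x^T <= F)%MS.

Variable Sigma : finType.

(* U_x = U_{s_m} ... U_{s_1} for x = s_1 ... s_m ; U_eps = I *)
Definition Uword n (U : Sigma -> 'M[C]_n) (x : seq Sigma) : 'M[C]_n :=
  foldl (fun M s => U s *m M) 1%:M x.

Definition oword := nat -> Sigma.

Definition prefix (w : oword) (m : nat) : seq Sigma := mkseq w m.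

Definition catw (x : seq Sigma) (v : oword) : oword :=
  fun i => if (i < size x)%N then nth (v 0%N) x i else v (i - size x)%N.

Definition wpow (w : seq Sigma) (k : nat) : seq Sigma := flatten (nseq k w).

Definition run n (s0 : 'cV[C]_n) (U : Sigma -> 'M[C]_n) (w : oword) (m : nat) : 'cV[C]_n :=
  Uword U (prefix w m) *m s0.

Definition fND n (s0 : 'cV[C]_n) (U : Sigma -> 'M[C]_n) (F : 'M[C]_n) (w : oword) : R :=
  sup [set r : R | exists psi : 'cV[C]_n, in_space F psi /\ unit_vector psi /\
        exists ns : nat -> nat, (forall i, (ns i < ns i.+1)%N) /\
        r = inf [set y : R | exists i : nat, y = sqmod (inner psi (run s0 U w (ns i)))]].

End QA.

(* Main.v *)
Set Warnings "-notation-overridden,-ambiguous-paths,-notation-incompatible-prefix".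
Require Import Defs.
From HB Require Import structures.
From mathcomp Require Import all_boot all_order all_algebra.
From mathcomp Require Import complex.
From mathcomp Require Import reals.
From mathcomp Require Import classical_sets boolp.
From mathcomp Require Import spectral sesquilinear.
From mathcomp Require Import ring lra zify.
Import Order.TTheory GRing.Theory Num.Theory archimedean.Num.Theory archimedean.Num.Def.
Local Open Scope ring_scope.
Set Implicit Arguments. Unset Strict Implicit. Unset Printing Implicit Defensive.
Section S.
Variable R : realType.
Local Notation C := R[i].

Definition nc (z : C) : R := let: Complex a b := z in `|a| + `|b|.

Lemma nc_ge0 (z : C) : 0 <= nc z.
Proof. by case: z => a b /=; rewrite addr_ge0. Qed.

Lemma ncD (x y : C) : nc (x + y) <= nc x + nc y.
Proof.
case: x => a b; case: y => c d /=.
have h1 := ler_normD a c; have h2 := ler_normD b d; lra.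
Qed.

Lemma ncN (x : C) : nc (- x) = nc x.
Proof. by case: x => a b /=; rewrite !normrN. Qed.

Lemma ncM (x y : C) : nc (x * y) <= nc x * nc y.
Proof.
case: x => a b; case: y => c d /=.
have h1 := ler_normB (a * c) (b * d); have h2 := ler_normD (a * d) (b * c).
rewrite !normrM in h1 h2.
have : `|a| * `|c| + `|b| * `|d| + (`|a| * `|d| + `|b| * `|c|) = (`|a| + `|b|) * (`|c| + `|d|) by ring.
lra.
Qed.

Lemma ncJ (x : C) : nc (x^*)%C = nc x.
Proof. by case: x => a b /=; rewrite normrN. Qed.

Lemma nc0 : nc 0 = 0.
Proof. by rewrite /= normr0 addr0. Qed.

Lemma nc_sum (I : Type) (r : seq I) (P : pred I) (F : I -> C) :
  nc (\sum_(i <- r | P i) F i) <= \sum_(i <- r | P i) nc (F i).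
Proof.
elim/big_rec2: _ => [|i y1 y2 _ Hy]; first by rewrite nc0.
by apply: le_trans (ncD _ _) _; rewrite lerD2l.
Qed.

Lemma sqmod_ge0 (z : C) : 0 <= sqmod z.
Proof. by case: z => a b /=; rewrite addr_ge0 // sqr_ge0. Qed.

Lemma sqmod_le (z : C) : sqmod z <= nc z ^+ 2.
Proof.
case: z => a b /=.
have ha := normr_ge0 a; have hb := normr_ge0 b.
rewrite -(real_normK (num_real a)) -(real_normK (num_real b)). nra.
Qed.

Lemma nc_le2 (z : C) : sqmod z <= 1 -> nc z <= 2.
Proof.
case: z => a b /= h.
have ha : `|a| <= 1.
  rewrite -(ler_pXn2r (n:=2)) ?nnegrE //= ?expr1n ?real_normK ?num_real //.
  have := sqr_ge0 b; lra.
have hb : `|b| <= 1.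
  rewrite -(ler_pXn2r (n:=2)) ?nnegrE //= ?expr1n ?real_normK ?num_real //.
  have := sqr_ge0 a; lra.
lra.
Qed.

Lemma sqmod_diff (x y : C) : `|sqmod x - sqmod y| <= nc (x - y) * (nc x + nc y).
Proof.
case: x => a b; case: y => c d /=.
have -> : a ^+ 2 + b ^+ 2 - (c ^+ 2 + d ^+ 2) = (a - c) * (a + c) + (b - d) * (b + d) by ring.
apply: le_trans (ler_normD _ _) _; rewrite !normrM.
have h1 := ler_normD a c; have h2 := ler_normD b d.
have g1 := normr_ge0 (a - c); have g2 := normr_ge0 (b - d).
have g3 := normr_ge0 a; have g4 := normr_ge0 b; have g5 := normr_ge0 c; have g6 := normr_ge0 d.
have e1 : `|a - c| * `|a + c| <= `|a - c| * (`|a| + `|c|) by rewrite ler_wpM2l.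
have e2 : `|b - d| * `|b + d| <= `|b - d| * (`|b| + `|d|) by rewrite ler_wpM2l.
nra.
Qed.

Lemma conjM_sqmod (z : C) : ((z^*)%C * z) = (sqmod z)%:C%C.
Proof. by case: z => a b; simpc; rewrite /= -!expr2; congr Complex; ring. Qed.

Lemma sqmodM (x y : C) : sqmod (x * y) = sqmod x * sqmod y.
Proof. by case: x => a b; case: y => c d /=; ring. Qed.

Lemma conjCE (x : C) : Num.conj x = (x^*)%C.
Proof.
case: x => a b.
have -> : (Complex a b) = ((a%:C)%C + 'i * (b%:C)%C) by simpc.
by rewrite conjC_rect ?complex_real //; simpc.
Qed.

Definition Sn m p (A : 'M[C]_(m, p)) : R := \sum_i \sum_j nc (A i j).

Lemma Sn_ge0 m p (A : 'M[C]_(m, p)) : 0 <= Sn A.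
Proof. by apply: sumr_ge0 => i _; apply: sumr_ge0 => j _; apply: nc_ge0. Qed.

Lemma row_le_Sn m p (A : 'M[C]_(m, p)) l : \sum_j nc (A l j) <= Sn A.
Proof.
rewrite /Sn (bigD1 l) //= lerDl; apply: sumr_ge0 => i _.
by apply: sumr_ge0 => j _; apply: nc_ge0.
Qed.

Lemma Sn_mul m p q (A : 'M[C]_(m, p)) (B : 'M[C]_(p, q)) :
  Sn (A *m B) <= Sn A * Sn B.
Proof.
apply: (@le_trans _ _ (\sum_i \sum_l nc (A i l) * \sum_j nc (B l j))).
  rewrite /Sn; apply: ler_sum => i _.
  apply: (@le_trans _ _ (\sum_j \sum_l nc (A i l) * nc (B l j))).
    apply: ler_sum => j _; rewrite mxE; apply: le_trans (nc_sum _ _ _) _.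
    by apply: ler_sum => l _; apply: ncM.
  by rewrite exchange_big /=; apply: ler_sum => l _; rewrite mulr_sumr.
rewrite /Sn mulr_suml; apply: ler_sum => i _; rewrite mulr_suml.
apply: ler_sum => l _; apply: ler_wpM2l; first exact: nc_ge0.
exact: row_le_Sn.
Qed.

Lemma Sn_bound m p (A : 'M[C]_(m, p)) b :
  (forall i j, nc (A i j) <= b) -> Sn A <= (m * p)%:R * b.
Proof.
move=> H; apply: (@le_trans _ _ (\sum_(i < m) \sum_(j < p) b)).
  by apply: ler_sum => i _; apply: ler_sum => j _; apply: H.
by rewrite sumr_const card_ord sumr_const card_ord -mulrnA mulr_natl mulnC.
Qed.

Lemma entry_le_Sn m p (A : 'M[C]_(m, p)) i j : nc (A i j) <= Sn A.
Proof.
apply: le_trans (row_le_Sn A i); rewrite (bigD1 j) //= lerDl.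
by apply: sumr_ge0 => k _; apply: nc_ge0.
Qed.

Lemma inner_bound n (psi y : 'cV[C]_n) :
  (forall i, nc (psi i 0) <= 2) -> nc (inner psi y) <= 2 * Sn y.
Proof.
move=> H; rewrite /inner; apply: le_trans (nc_sum _ _ _) _.
rewrite /Sn mulr_sumr; apply: ler_sum => i _; rewrite big_ord1.
apply: le_trans (ncM _ _) _; rewrite ncJ ler_wpM2r //; exact: nc_ge0.
Qed.

Lemma innerB n (psi x y : 'cV[C]_n) : inner psi y - inner psi x = inner psi (y - x).
Proof.
by rewrite /inner -sumrB; apply: eq_bigr => i _; rewrite !mxE mulrBr.
Qed.

Lemma sum_conj_le1 n (f : 'I_n -> C) :
  \sum_i ((f i)^*)%C * f i = 1 -> forall i, sqmod (f i) <= 1.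
Proof.
move=> Hs i.
have H' : \sum_i sqmod (f i) = 1.
  apply: (@complexI R); rewrite rmorph_sum rmorph1 -Hs.
  by apply: eq_bigr => j _; rewrite conjM_sqmod.
rewrite -H' (bigD1 i) //= lerDl; apply: sumr_ge0 => j _; exact: sqmod_ge0.
Qed.

Lemma unit_entry n (x : 'cV[C]_n) i : unit_vector x -> nc (x i 0) <= 2.
Proof. by move=> H; apply: nc_le2; exact: (sum_conj_le1 (f := fun i => x i 0) H). Qed.

Lemma adjointE n (U : 'M[C]_n) i j : adjoint U i j = ((U j i)^*)%C.
Proof. by rewrite /adjoint !mxE. Qed.

Lemma unitary_entry n (U : 'M[C]_n) i j : unitary U -> nc (U i j) <= 2.
Proof.
move=> [H _]; apply: nc_le2.
apply: (sum_conj_le1 (f := fun i => U i j)).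
have := congr1 (fun M : 'M[C]_n => M j j) H; rewrite !mxE eqxx /= => E; apply: etrans E; apply: esym.
by apply: eq_bigr => l _; rewrite adjointE.
Qed.

Lemma adjointM n (A B : 'M[C]_n) : adjoint (A *m B) = adjoint B *m adjoint A.
Proof.
apply/matrixP => i j; rewrite adjointE !mxE rmorph_sum /=.
by apply: eq_bigr => l _; rewrite !adjointE rmorphM mulrC.
Qed.

Lemma adjoint1 n : adjoint (1%:M : 'M[C]_n) = 1%:M.
Proof.
by apply/matrixP => i j; rewrite adjointE !mxE conjc_nat eq_sym.
Qed.

Lemma unitary1 n : unitary (1%:M : 'M[C]_n).
Proof. by rewrite /unitary adjoint1 mulmx1. Qed.

Lemma unitaryM n (A B : 'M[C]_n) : unitary A -> unitary B -> unitary (A *m B).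
Proof.
move=> [HA1 HA2] [HB1 HB2]; rewrite /unitary adjointM; split.
  by rewrite mulmxA -(mulmxA (adjoint B)) HA1 mulmx1 HB1.
by rewrite mulmxA -(mulmxA A) HB2 mulmx1 HA2.
Qed.

Lemma Sn_unitary n (U : 'M[C]_n) : unitary U -> Sn U <= (n * n)%:R * 2.
Proof. by move=> H; apply: Sn_bound => i j; apply: unitary_entry. Qed.

Lemma Sn_unit n (x : 'cV[C]_n) : unit_vector x -> Sn x <= (n * 1)%:R * 2.
Proof. move=> H; apply: Sn_bound => i j; rewrite ord1; exact: unit_entry. Qed.

Section Words.
Variable Sigma : finType.
Variable n : nat.
Variable U : Sigma -> 'M[C]_n.

Lemma Uword_foldl (y : seq Sigma) (M0 : 'M[C]_n) :
  foldl (fun M s => U s *m M) M0 y = Uword U y *m M0.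
Proof.
elim: y M0 => [|s y IH] M0 /=; first by rewrite /Uword /= mul1mx.
by rewrite IH [in RHS]/Uword /= IH mulmx1 mulmxA.
Qed.

Lemma Uword_cat (x y : seq Sigma) : Uword U (x ++ y) = Uword U y *m Uword U x.
Proof. by rewrite /Uword foldl_cat -/(Uword U x) Uword_foldl. Qed.

Lemma Uword_unitary (x : seq Sigma) : (forall s, unitary (U s)) -> unitary (Uword U x).
Proof.
move=> HU; elim/last_ind: x => [|x s IH]; first exact: unitary1.
by rewrite -cats1 Uword_cat; apply: unitaryM => //; rewrite /Uword /= mulmx1.
Qed.

Definition mpow (W : 'M[C]_n) k := iter k (fun M => M *m W) 1%:M.

Lemma Uword_wpow (w : seq Sigma) k : Uword U (wpow w k) = mpow (Uword U w) k.
Proof.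
elim: k => [|k IH] //=.
by rewrite -IH (_ : wpow w k.+1 = w ++ wpow w k) // Uword_cat.
Qed.

Lemma size_wpow (w : seq Sigma) k : size (wpow w k) = (k * size w)%N.
Proof. by elim: k => [|k IH] //=; rewrite size_cat -/(wpow w k) IH mulSn. Qed.

Lemma prefix_catw (x : seq Sigma) (v : oword Sigma) m :
  Defs.prefix (catw x v) (size x + m) = x ++ Defs.prefix v m.
Proof.
rewrite /Defs.prefix /mkseq iotaD map_cat; congr (_ ++ _).
  rewrite -{3}(mkseq_nth (v 0%N) x) /mkseq; apply/eq_in_map => i.
  by rewrite mem_iota add0n /catw => /andP[_ ->].
rewrite [(0 + size x)%N]addnC iotaDl -map_comp; apply: eq_map => i /=.
by rewrite /catw ltnNge leq_addr /= addKn.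
Qed.

Lemma run_catw (s0 : 'cV[C]_n) (x : seq Sigma) (v : oword Sigma) m :
  run s0 U (catw x v) (size x + m) = Uword U (Defs.prefix v m) *m (Uword U x *m s0).
Proof. by rewrite /run prefix_catw Uword_cat mulmxA. Qed.

End Words.

Local Open Scope classical_set_scope.

Definition vinf (f : nat -> R) (ns : nat -> nat) : R :=
  inf [set y : R | exists i : nat, y = f (ns i)].

Definition incr (ns : nat -> nat) := forall i, (ns i < ns i.+1)%N.

Lemma incr_ge ns : incr ns -> forall i, (i <= ns i)%N.
Proof.
move=> H; elim => [|i IH] //; exact: leq_ltn_trans IH (H i).
Qed.

Lemma val_lb f ns i : (forall m, 0 <= f m) -> vinf f ns <= f (ns i).
Proof.
move=> H; apply: ge_inf; last by exists i.
by exists 0 => y [j ->].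
Qed.

Lemma val_ge0 f ns : (forall m, 0 <= f m) -> 0 <= vinf f ns.
Proof.
move=> H; apply: lb_le_inf; first by exists (f (ns 0%N)), 0%N.
by move=> y [j ->].
Qed.

Lemma val_shift f1 f2 o1 o2 D :
  (forall m, 0 <= f1 m) ->
  (forall m, f1 (o1 + m)%N - D <= f2 (o2 + m)%N) ->
  forall ns, incr ns -> exists ns', incr ns' /\ vinf f1 ns - D <= vinf f2 ns'.
Proof.
move=> H0 H ns Hns.
have Hge := incr_ge Hns.
exists (fun i => o2 + (ns (i + o1) - o1))%N; split.
  move=> i /=; rewrite ltn_add2l; have := Hns (i + o1)%N; have := Hge (i + o1)%N.
  by rewrite addSn; lia.
apply: lb_le_inf; first by eexists; exists 0%N.
move=> y [i ->]; apply: le_trans (H _).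
rewrite subnKC; last by have := Hge (i + o1)%N; lia.
by rewrite lerD2r; apply: val_lb.
Qed.

Section SupClose.
Variable T : Type.
Variables P1 P2 : T -> Prop.

Definition Sset (g : T -> nat -> R) : set R :=
  [set r : R | exists t, P1 t /\ P2 t /\ exists ns : nat -> nat,
     (forall i, (ns i < ns i.+1)%N) /\ r = vinf (g t) ns].

Lemma sup_half (g1 g2 : T -> nat -> R) D B :
  (forall t, P1 t -> P2 t -> forall m, 0 <= g2 t m <= B) ->
  (forall t, P1 t -> P2 t -> forall ns, incr ns ->
     exists ns', incr ns' /\ vinf (g1 t) ns - D <= vinf (g2 t) ns') ->
  Sset g1 !=set0 -> Sset g2 !=set0 /\ sup (Sset g1) <= sup (Sset g2) + D.
Proof.
move=> HB H [r [t [h1 [h2 [ns [hns _]]]]]].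
have [ns' [hns' E]] := H t h1 h2 ns hns.
have ne2 : Sset g2 !=set0 by exists (vinf (g2 t) ns'); exists t; split => //; split => //; exists ns'; split.
split => //.
have ub2 : has_ubound (Sset g2).
  exists B => y [t' [q1 [q2 [ns2 [_ ->]]]]].
  apply: le_trans (val_lb _ 0%N _) _; first by move=> m; have /andP[] := HB t' q1 q2 m.
  by have /andP[] := HB t' q1 q2 (ns2 0%N).
apply: ge_sup; first by exists (vinf (g1 t) ns); exists t; split => //; split => //; exists ns; split.
move=> y [t1 [a1 [a2 [ns1 [hns1 ->]]]]].
have [ns2 [hns2 E2]] := H t1 a1 a2 ns1 hns1.
rewrite -lerBlDr; apply: le_trans E2 _; apply: ub_le_sup => //.
by exists t1; split => //; split => //; exists ns2; split.
Qed.

Lemma sup_close (g1 g2 : T -> nat -> R) D B :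
  0 <= D ->
  (forall t, P1 t -> P2 t -> forall m, 0 <= g1 t m <= B) ->
  (forall t, P1 t -> P2 t -> forall m, 0 <= g2 t m <= B) ->
  (forall t, P1 t -> P2 t -> forall ns, incr ns ->
     exists ns', incr ns' /\ vinf (g1 t) ns - D <= vinf (g2 t) ns') ->
  (forall t, P1 t -> P2 t -> forall ns, incr ns ->
     exists ns', incr ns' /\ vinf (g2 t) ns - D <= vinf (g1 t) ns') ->
  `| sup (Sset g1) - sup (Sset g2) | <= D.
Proof.
move=> D0 HB1 HB2 H12 H21.
have [ne1|ne1] := pselect (Sset g1 !=set0).
  have [ne2 le1] := sup_half HB2 H12 ne1.
  have [_ le2] := sup_half HB1 H21 ne2.
  by rewrite ler_norml; apply/andP; split; lra.
have ne2 : ~ (Sset g2 !=set0) by move=> ne2; apply: ne1; have [] := sup_half HB1 H21 ne2.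
have -> : Sset g1 = set0.
  by apply/funext => r; apply/propext; split => // Hr; apply: ne1; exists r.
have -> : Sset g2 = set0.
  by apply/funext => r; apply/propext; split => // Hr; apply: ne2; exists r.
by rewrite subrr normr0.
Qed.
End SupClose.

Lemma norm_sign (a a' : R) : (a < 0) = (a' < 0) -> `|a - a'| = `| `|a| - `|a'| |.
Proof.
case: (ltrP a 0) => ha; case: (ltrP a' 0) => ha' //= _.
  by rewrite (ltr0_norm ha) (ltr0_norm ha') -opprD normrN.
by rewrite (ger0_norm ha) (ger0_norm ha').
Qed.

Lemma circ_core (t s t' s' h : R) : 0 <= t -> 0 <= s -> 0 <= t' -> 0 <= s' ->
  t ^+ 2 + s ^+ 2 = 1 -> t' ^+ 2 + s' ^+ 2 = 1 -> t <= s -> t' <= s' ->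
  `|t - t'| < h -> `|t - t'| + `|s - s'| <= 2 * h.
Proof.
move=> g1 g2 g3 g4 e e' h1 h2 ht.
have sp : 0 < s + s' by nra.
have key : `|s - s'| * (s + s') <= `|t - t'| * (s + s').
  rewrite -(ger0_norm (ltW sp)) -!normrM.
  have -> : (s - s') * (s + s') = (t' - t) * (t + t') by nra.
  rewrite !normrM (distrC t') ler_wpM2l ?normr_ge0 // !ger0_norm ?addr_ge0 //; lra.
rewrite ler_pM2r // in key; lra.
Qed.

Lemma circ_close (a b a' b' h : R) :
  a ^+ 2 + b ^+ 2 = 1 -> a' ^+ 2 + b' ^+ 2 = 1 -> `|a| <= `|b| -> `|a'| <= `|b'| ->
  (a < 0) = (a' < 0) -> (b < 0) = (b' < 0) -> `| `|a| - `|a'| | < h ->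
  `|a - a'| + `|b - b'| <= 2 * h.
Proof.
move=> e e' hab hab' sa sb ht.
rewrite (norm_sign sa) (norm_sign sb).
rewrite -(real_normK (num_real a)) -(real_normK (num_real b)) in e.
rewrite -(real_normK (num_real a')) -(real_normK (num_real b')) in e'.
by apply: circ_core => //; apply: normr_ge0.
Qed.

Section Circle.
Variable h : R.
Hypothesis hpos : 0 < h.
Let L := truncn (h^-1).

Definition ckey (z : C) : bool * bool * bool * 'I_(L.+1) :=
  let: Complex a b := z in
  (`|a| <= `|b|, a < 0, b < 0, inord (truncn (Num.min `|a| `|b| / h))).

Lemma sq_le1_norm (a b : R) : a ^+ 2 + b ^+ 2 = 1 -> `|a| <= 1.
Proof.
move=> e; rewrite -(ler_pXn2r (n:=2)) ?nnegrE //= ?expr1n ?real_normK ?num_real //.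
have := sqr_ge0 b; lra.
Qed.

Lemma trunc_bound (x : R) : 0 <= x <= 1 -> (truncn (x / h) <= L)%N.
Proof.
move=> /andP[x0 x1]; apply: le_truncn.
by rewrite ler_pdivrMr // mulVf ?gt_eqF // ler_pMr ?invr_gt0.
Qed.

Lemma trunc_close (x y : R) : 0 <= x -> 0 <= y ->
  truncn (x / h) = truncn (y / h) -> `|x - y| < h.
Proof.
move=> x0 y0 e.
have hx : 0 <= x / h by rewrite divr_ge0 // ltW.
have hy : 0 <= y / h by rewrite divr_ge0 // ltW.
have /andP[a1 a2] := truncn_itv hx; have /andP[b1 b2] := truncn_itv hy.
rewrite e in a1 a2.
have : `|x / h - y / h| < 1.
  rewrite ltr_norml; apply/andP; split; rewrite -natr1 in a2 b2; lra.
by rewrite -mulrBl normrM (gtr0_norm (x := h^-1)) ?invr_gt0 // ltr_pdivrMr // mul1r.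
Qed.

Lemma ckey_close (z z' : C) : sqmod z = 1 -> sqmod z' = 1 -> ckey z = ckey z' ->
  nc (z - z') <= 2 * h.
Proof.
case: z => a b; case: z' => a' b' /= e e' [k1 k2 k3 k4].
have na := sq_le1_norm e; have na' := sq_le1_norm e'.
have nb : `|b| <= 1 by apply: (@sq_le1_norm b a); rewrite addrC.
have nb' : `|b'| <= 1 by apply: (@sq_le1_norm b' a'); rewrite addrC.
have bnd : forall x y : R, `|x| <= 1 -> (truncn (Num.min `|x| `|y| / h)%R <= L)%N.
  move=> x y hx; apply: trunc_bound; rewrite le_min normr_ge0 normr_ge0 /=.
  by rewrite ge_min hx.
have k4' := congr1 (@nat_of_ord _) k4; rewrite /= !inordK ?ltnS ?bnd // in k4'.
have m0 : forall x y : R, 0 <= Num.min `|x| `|y| by move=> x y; rewrite le_min !normr_ge0.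
have ht := trunc_close (m0 a b) (m0 a' b') k4'.
rewrite /nc /=.
case: (boolP (`|a| <= `|b|)) => hab.
  rewrite hab in k1; have hab' : `|a'| <= `|b'| by rewrite -k1.
  rewrite (min_l hab) (min_l hab') in ht.
  by apply: circ_close.
rewrite (negbTE hab) in k1.
have hba : `|b| <= `|a| by rewrite leNgt; apply: contra hab => /ltW ->.
have hba' : `|b'| <= `|a'| by rewrite leNgt; apply: contra (negbT (esym k1)) => /ltW ->.
rewrite (min_r hba) (min_r hba') in ht.
rewrite addrC; apply: circ_close => //; by rewrite addrC.
Qed.
End Circle.

Lemma sqmodX (z : C) m : sqmod (z ^+ m) = sqmod z ^+ m.
Proof.
elim: m => [|m IH]; first by rewrite !expr0 /= expr0n /= addr0 expr1n.
by rewrite !exprS sqmodM IH.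
Qed.

Lemma sqmodJ (z : C) : sqmod (z^*)%C = sqmod z.
Proof. by case: z => a b /=; rewrite sqrrN. Qed.

Lemma pigeon n (d : 'rV[C]_n) h : 0 < h -> (forall j, sqmod (d 0 j) = 1) ->
  exists k, (0 < k)%N /\ (k <= (8 * (truncn h^-1).+1) ^ n)%N /\
    forall j, nc (d 0 j ^+ k - 1) <= 4 * h.
Proof.
move=> hpos hd.
pose T := (bool * bool * bool * 'I_(truncn h^-1).+1)%type.
pose N := #|{ffun 'I_n -> T}|.
have cardN : N = ((8 * (truncn h^-1).+1) ^ n)%N.
  by rewrite /N card_ffun !card_prod !card_bool !card_ord.
pose f : 'I_N.+1 -> {ffun 'I_n -> T} := fun m => [ffun j => ckey h (d 0 j ^+ m)].
have : ~~ injectiveb f.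
  apply/negP => /injectiveP /leq_card; rewrite card_ord.
  by rewrite -/N ltnn.
case/injectivePn => x [y] xy fxy.
wlog lt_xy : x y xy fxy / (x < y)%N.
  move=> W; case: (ltngtP x y) => hxy.
  - exact: (W x y).
  - by apply: (W y x) => //; rewrite eq_sym.
  - by move/eqP: xy; case; apply: val_inj.
have yN : (y <= N)%N by rewrite -ltnS.
exists (y - x)%N; split; first by rewrite subn_gt0.
split; first by rewrite -cardN; apply: leq_trans (leq_subr _ _) yN.
move=> j.
have kj := congr1 (fun g : {ffun 'I_n -> T} => g j) fxy; rewrite /= !ffunE in kj.
have sx : sqmod (d 0 j ^+ x) = 1 by rewrite sqmodX hd expr1n.
have sy : sqmod (d 0 j ^+ y) = 1 by rewrite sqmodX hd expr1n.
have cl := ckey_close hpos sx sy kj.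
set z := d 0 j in cl sx sy *.
have -> : z ^+ (y - x) - 1 = ((z ^+ x)^*)%C * (z ^+ y - z ^+ x).
  have -> : z ^+ y = z ^+ x * z ^+ (y - x) by rewrite -exprD subnKC // ltnW.
  by rewrite mulrBr mulrA conjM_sqmod sx rmorph1 mul1r.
apply: le_trans (ncM _ _) _.
rewrite ncJ -opprB ncN.
have h2 : nc (z ^+ x) <= 2 by apply: nc_le2; rewrite sx.
have := nc_ge0 (z ^+ x - z ^+ y).
nra.
Qed.

Local Open Scope sesquilinear_scope.

Lemma tstar_adj n (W : 'M[C]_n) : W ^t* = adjoint W.
Proof. by apply/matrixP => i j; rewrite adjointE !mxE conjCE. Qed.

Lemma adjoint_entry n (P : 'M[C]_n) i j : unitary P -> nc (adjoint P i j) <= 2.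
Proof. by move=> H; rewrite adjointE ncJ; apply: unitary_entry. Qed.

Lemma diag_unit n (dd : 'rV[C]_n) j : unitary (diag_mx dd) -> sqmod (dd 0 j) = 1.
Proof.
move=> [H _].
have := congr1 (fun M : 'M[C]_n => M j j) H; rewrite !mxE eqxx /=.
rewrite (bigD1 j) //= big1 ?addr0; last first.
  by move=> l /negbTE nl; rewrite adjointE !mxE nl mulr0n rmorph0 mul0r.
rewrite adjointE !mxE eqxx !mulr1n conjM_sqmod => E.
by apply: (@complexI R); rewrite E rmorph1.
Qed.

Lemma unitary_approx n (W : 'M[C]_n) h : unitary W -> 0 < h ->
  exists k, (0 < k)%N /\ (k <= (8 * (truncn h^-1).+1) ^ n)%N /\
    Sn (mpow W k - 1%:M) <= ((n * n)%:R * 2) * ((n * n)%:R * (4 * h)) * ((n * n)%:R * 2).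
Proof.
move=> [HW1 HW2] hpos.
have Wn : W \is normalmx by apply/normalmxP; rewrite tstar_adj HW1 HW2.
have := orthomx_spectralP Wn.
set P := spectralmx W; set dd := spectral_diag W => EW.
have Pu : P \is unitarymx := spectral_unitarymx W.
have iP : invmx P = adjoint P by rewrite invmx_unitary // tstar_adj.
have P1 : P *m adjoint P = 1%:M by rewrite -tstar_adj; apply/unitarymxP.
have P2 : adjoint P *m P = 1%:M.
  by have := mulmxKtV (1%:M : 'M[C]_n) Pu erefl; rewrite mul1mx tstar_adj.
have PU : unitary P by split.
have adjK : adjoint (adjoint P) = P by apply/matrixP => i j; rewrite !adjointE conjcK.
have PUa : unitary (adjoint P) by split; rewrite adjK.
rewrite iP in EW.
have ED : diag_mx dd = P *m W *m adjoint P.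
  by rewrite EW !mulmxA P1 mul1mx -mulmxA P1 mulmx1.
have hd : forall j, sqmod (dd 0 j) = 1.
  move=> j; apply: diag_unit; rewrite ED; apply: unitaryM => //; apply: unitaryM => //.
have Epow : forall k, mpow W k = adjoint P *m diag_mx (\row_j (dd 0 j ^+ k)) *m P.
  elim => [|k IH].
    rewrite /mpow /= (_ : \row_j _ = const_mx 1); last by apply/matrixP => i j; rewrite !mxE expr0.
    by rewrite diag_const_mx mulmx1 P2.
  rewrite /mpow /= -/(mpow W k) IH [X in _ *m X = _]EW.
  rewrite !mulmxA -(mulmxA _ P) P1 mulmx1 -(mulmxA (adjoint P)) mulmx_diag.
  by congr (_ *m diag_mx _ *m _); apply/matrixP => i j; rewrite !mxE exprSr.
have [k [k0 [kN hk]]] := pigeon hpos hd.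
exists k; split => //; split => //.
have -> : mpow W k - 1%:M = adjoint P *m diag_mx (\row_j (dd 0 j ^+ k - 1)) *m P.
  have -> : diag_mx (\row_j (dd 0 j ^+ k - 1)) = diag_mx (\row_j (dd 0 j ^+ k)) - 1%:M.
    apply/matrixP => i j; rewrite !mxE; case: eqP => _; by rewrite ?mulr1n ?mulr0n ?subr0.
  by rewrite mulmxBr mulmxBl mulmx1 P2 Epow.
apply: le_trans (Sn_mul _ _) _.
apply: ler_pM; [exact: Sn_ge0 | exact: Sn_ge0 | | by apply: Sn_unitary].
apply: le_trans (Sn_mul _ _) _.
apply: ler_pM; [exact: Sn_ge0 | exact: Sn_ge0 | | ].
  by apply: Sn_bound => i j; apply: adjoint_entry.
apply: Sn_bound => i j; rewrite !mxE.
case: eqP => _; rewrite ?mulr1n ?mulr0n; first exact: hk.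
by rewrite nc0 mulr_ge0 // ltW.
Qed.

Definition SU n : R := (n * n)%:R * 2.
Definition SV n : R := (n * 1)%:R * 2.
Definition KW n : R := SU n * ((n * n)%:R * 4) * SU n.
Definition KK n : R := 2 * (SU n * (KW n * (SU n * SV n))) * (4 * (SU n * SV n)).

Lemma SU_ge0 n : 0 <= SU n. Proof. by rewrite /SU mulr_ge0. Qed.
Lemma SV_ge0 n : 0 <= SV n. Proof. by rewrite /SV mulr_ge0. Qed.
Lemma KW_ge0 n : 0 <= KW n. Proof. by rewrite /KW !mulr_ge0 ?SU_ge0. Qed.
Lemma KK_ge0 n : 0 <= KK n.
Proof. by rewrite /KK !mulr_ge0 ?SU_ge0 ?SV_ge0 ?KW_ge0. Qed.

Lemma vec_bound n (M : 'M[C]_n) (s0 : 'cV[C]_n) :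
  unitary M -> unit_vector s0 -> Sn (M *m s0) <= SU n * SV n.
Proof.
move=> HM Hs; apply: le_trans (Sn_mul _ _) _.
by apply: ler_pM; rewrite ?Sn_ge0 ?Sn_unitary ?Sn_unit.
Qed.

Lemma inner_vec_bound n (psi : 'cV[C]_n) (M : 'M[C]_n) (s0 : 'cV[C]_n) :
  unit_vector psi -> unitary M -> unit_vector s0 ->
  nc (inner psi (M *m s0)) <= 2 * (SU n * SV n).
Proof.
move=> Hp HM Hs; apply: le_trans (inner_bound _ _) _.
  by move=> i; apply: unit_entry.
by rewrite ler_pM2l // vec_bound.
Qed.

Lemma diff_bound n (psi s0 : 'cV[C]_n) (V W X : 'M[C]_n) d :
  unit_vector psi -> unit_vector s0 -> unitary V -> unitary W -> unitary X ->
  Sn (W - 1%:M) <= d ->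
  `|sqmod (inner psi (V *m (X *m s0))) - sqmod (inner psi (V *m (W *m X *m s0)))|
    <= (2 * (SU n * (d * (SU n * SV n)))) * (4 * (SU n * SV n)).
Proof.
move=> Hp Hs HV HW HX Hd.
rewrite distrC; apply: le_trans (sqmod_diff _ _) _.
apply: ler_pM; [exact: nc_ge0 | by rewrite addr_ge0 ?nc_ge0 | | ].
  rewrite innerB.
  have -> : V *m (W *m X *m s0) - V *m (X *m s0) = V *m ((W - 1%:M) *m (X *m s0)).
    by rewrite mulmxBl mul1mx mulmxBr (mulmxA W).
  apply: le_trans (inner_bound _ _) _; first by move=> i; apply: unit_entry.
  rewrite ler_pM2l //; apply: le_trans (Sn_mul _ _) _.
  apply: ler_pM; rewrite ?Sn_ge0 ?Sn_unitary //.
  apply: le_trans (Sn_mul _ _) _.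
  apply: ler_pM; rewrite ?Sn_ge0 //; exact: vec_bound.
have -> : 4 * (SU n * SV n) = 2 * (SU n * SV n) + 2 * (SU n * SV n) by ring.
apply: lerD.
  by rewrite (mulmxA V); apply: inner_vec_bound => //; apply: unitaryM => //; apply: unitaryM.
by rewrite mulmxA; apply: inner_vec_bound => //; apply: unitaryM.
Qed.

Lemma main_n n : exists c : R, 0 < c /\
  forall (Sigma : finType) (s0 : 'cV[C]_n) (U : Sigma -> 'M[C]_n) (F : 'M[C]_n),
    unit_vector s0 -> (forall s, unitary (U s)) ->
    forall (w : seq Sigma) (eps : R), w != [::] -> 0 < eps -> eps <= 1 ->
    exists k : nat, (0 < k)%N /\ (k%:R <= (c * eps) ^- n) /\
      forall (u : seq Sigma) (v : oword Sigma),
        `| fND s0 U F (catw u v) - fND s0 U F (catw (u ++ wpow w k) v) | <= eps.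
Proof.
have K0 := KK_ge0 n.
have K1 : 0 < KK n + 1 by lra.
exists (16 * (KK n + 1))^-1; split; first by rewrite invr_gt0 mulr_gt0.
move=> Sigma s0 U F Hs HU w eps _ e0 e1.
set W := Uword U w.
have HW : unitary W by apply: Uword_unitary.
have [h hdef] : {h : R | h = eps / (KK n + 1)} by exists (eps / (KK n + 1)).
have hpos : 0 < h by rewrite hdef divr_gt0.
have [k [k0 [kN hk]]] := unitary_approx HW hpos.
exists k; split => //; split.
  have hi : h^-1 = (KK n + 1) / eps by rewrite hdef invf_div.
  have hi1 : 1 <= h^-1.
    by rewrite hi ler_pdivlMr // mul1r; lra.
  have L1 : (truncn h^-1)%:R <= h^-1 by rewrite truncn_le ltW // invr_gt0.
  apply: (@le_trans _ _ (((8 * (truncn h^-1).+1)%N)%:R ^+ n)).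
    by rewrite -natrX ler_nat.
  have c0 : 0 <= (16 * (KK n + 1))^-1 by rewrite invr_ge0 mulr_ge0 // ltW.
  rewrite -exprVn; apply: lerXn2r; rewrite ?nnegrE ?invr_ge0 ?mulr_ge0 ?(ltW e0) //.
  have E : ((16 * (KK n + 1))^-1 * eps)^-1 = 16 * h^-1 by rewrite invfM invrK hi mulrA.
  rewrite E natrM -[(truncn _).+1%:R]natr1.
  have -> : (8%:R : R) = 8 by [].
  lra.
move=> u v.
have Dle : KK n * h <= eps.
  rewrite hdef mulrA ler_pdivrMr // mulrDr mulr1; lra.
apply: le_trans Dle.
have HWk : unitary (mpow W k) by rewrite /W -Uword_wpow; apply: Uword_unitary.
have hk' : Sn (mpow W k - 1%:M) <= KW n * h.
  apply: le_trans hk _; rewrite le_eqVlt; apply/orP; left; apply/eqP; rewrite /KW /SU; ring.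
have key : forall psi : 'cV[C]_n, unit_vector psi -> forall m,
  `| sqmod (inner psi (run s0 U (catw u v) (size u + m)))
     - sqmod (inner psi (run s0 U (catw (u ++ wpow w k) v) (size (u ++ wpow w k) + m))) |
   <= KK n * h.
  move=> psi Hp m; rewrite !run_catw Uword_cat Uword_wpow -/W.
  apply: le_trans (diff_bound Hp Hs (Uword_unitary _ HU) HWk (Uword_unitary _ HU) hk') _.
  rewrite le_eqVlt; apply/orP; left; apply/eqP; rewrite /KK; ring.
have bnd : forall (x : oword Sigma) (psi : 'cV[C]_n), in_space F psi -> unit_vector psi ->
    forall m, 0 <= sqmod (inner psi (run s0 U x m)) <= (2 * (SU n * SV n)) ^+ 2.
  move=> x psi _ Hp m; rewrite sqmod_ge0 /=.
  apply: le_trans (sqmod_le _) _; apply: lerXn2r; rewrite ?nnegrE ?nc_ge0 ?mulr_ge0 ?SU_ge0 ?SV_ge0 //.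
  by apply: inner_vec_bound => //; apply: Uword_unitary.
apply: (@sup_close _ (in_space F) (@unit_vector _ n)
   (fun psi m => sqmod (inner psi (run s0 U (catw u v) m)))
   (fun psi m => sqmod (inner psi (run s0 U (catw (u ++ wpow w k) v) m)))
   (KK n * h) ((2 * (SU n * SV n)) ^+ 2)).
- by rewrite mulr_ge0 // ltW.
- exact: bnd.
- exact: bnd.
- move=> psi _ Hp; apply: (val_shift (o1 := size u) (o2 := size (u ++ wpow w k))).
    by move=> m; apply: sqmod_ge0.
  move=> m; have := key psi Hp m; rewrite ler_norml => /andP[a b]; lra.
- move=> psi _ Hp; apply: (val_shift (o1 := size (u ++ wpow w k)) (o2 := size u)).
    by move=> m; apply: sqmod_ge0.
  move=> m; have := key psi Hp m; rewrite ler_norml => /andP[a b]; lra.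
Qed.
End S.

Theorem theorem1 (R : realType) :
  (* main statement *)
  (forall (n : nat) (Sigma : finType) (s0 : 'cV[R[i]]_n)
          (U : Sigma -> 'M[R[i]]_n) (F : 'M[R[i]]_n),
     unit_vector s0 -> (forall s, unitary (U s)) ->
     forall (w : seq Sigma) (eps : R), w != [::] -> 0 < eps ->
     exists k : nat, (0 < k)%N /\
       forall (u : seq Sigma) (v : oword Sigma),
         `| fND s0 U F (catw u v) - fND s0 U F (catw (u ++ wpow w k) v) | <= eps)
  /\
  (* quantitative bound: for dimension n, k <= (c eps)^(-n) *)
  (forall n : nat, exists c : R, 0 < c /\
     forall (Sigma : finType) (s0 : 'cV[R[i]]_n)
            (U : Sigma -> 'M[R[i]]_n) (F : 'M[R[i]]_n),
     unit_vector s0 -> (forall s, unitary (U s)) ->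
     forall (w : seq Sigma) (eps : R), w != [::] -> 0 < eps -> eps <= 1 ->
     exists k : nat, (0 < k)%N /\ (k%:R <= (c * eps) ^- n) /\
       forall (u : seq Sigma) (v : oword Sigma),
         `| fND s0 U F (catw u v) - fND s0 U F (catw (u ++ wpow w k) v) | <= eps).
Proof.
split; last exact: main_n.
move=> n Sigma s0 U F Hs HU w eps hw he.
have [c [c0 H]] := main_n R n.
have m0 : 0 < Num.min eps 1 by rewrite lt_min he ltr01.
have m1 : Num.min eps 1 <= 1 by rewrite ge_min lexx orbT.
have [k [k0 [_ Hk]]] := H Sigma s0 U F Hs HU w (Num.min eps 1) hw m0 m1.
exists k; split => // u v; apply: le_trans (Hk u v) _.
by rewrite ge_min lexx.
Qed.
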